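(* Let $a,A$ be real with $a+3>0$ and $\frac{a+3}{2}=\frac{2}{A+3}$, and let $\xi,\eta,\mu$ be real. Then the general polynomial potentials $$U(r)=\xi r^{a+1}+\mu r^{2\left(\sqrt{\frac{a+3}{2}}-1\right)},\qquad V(\rho)=\eta\rho^{A+1}+\mu\left(\frac{A+3}{2}\right)^{2}\rho^{2\left(\sqrt{\frac{A+3}{2}}-1\right)}$$ are quantum Newtonianly dual, in the following sense: if $\mathcal{E}$ is real, $l,\ell$ are real with $l+\frac12=\frac{2}{A+3}(\ell+\frac12)$, $\xi=-\mathcal{E}\left(\frac{2}{A+3}\right)^2$, $E=-\eta\left(\frac{2}{A+3}\right)^2$, and $u\in C^2((0,\infty))$ solves $u''+\left[E-\frac{l(l+1)}{r^2}-U(r)\right]u=0$, then $v(\rho)=\rho^{-(A+1)/4}u\left(\rho^{(A+3)/2}\right)$ solves $v''+\left[\mathcal{E}-\frac{\ell(\ell+1)}{\rho^2}-V(\rho)\right]v=0$ on $(0,\infty)$. Moreover, $\xi r^{a+1}$ is the Newton dual of $\eta\rho^{A+1}$, and $\mu r^{2(\sqrt{(a+3)/2}-1)}$ is the Newton dual of $\mu\left(\frac{A+3}{2}\right)^2\rho^{2(\sqrt{(A+3)/2}-1)}$; i.e. with $b=2\sqrt{\frac{a+3}{2}}-3$ and $B=2\sqrt{\frac{A+3}{2}}-3$ one also has $\frac{b+3}{2}=\frac{2}{B+3}$.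
   Context: Three-dimensional radial equation (units $\hbar=2m=1$): $u''+\left[E-\frac{l(l+1)}{r^2}-W(r)\right]u=0$ for a central potential $W$. Two power potentials $\xi r^{\alpha+1}$ and $\eta\rho^{\beta+1}$ are Newtonianly dual when $\frac{\alpha+3}{2}=\frac{2}{\beta+3}$. *)

(* Defs.v *)
From Stdlib Require Import Reals.
From Coquelicot Require Import Coquelicot.
Open Scope R_scope.

Definition C2_pos (u : R -> R) : Prop :=
  exists u1 u2 : R -> R, forall r, 0 < r ->
    is_derive u r (u1 r) /\ is_derive u1 r (u2 r) /\ continuous u2 r.

Definition solves_radial (W : R -> R) (En l : R) (u : R -> R) : Prop :=
  exists u1 u2 : R -> R, forall r, 0 < r ->
    is_derive u r (u1 r) /\ is_derive u1 r (u2 r) /\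
    u2 r + (En - l * (l + 1) / r ^ 2 - W r) * u r = 0.

Definition newton_dual_exp (alpha beta : R) : Prop :=
  (alpha + 3) / 2 = 2 / (beta + 3).

Definition U_pot (a xi mu : R) (r : R) : R :=
  xi * Rpower r (a + 1) + mu * Rpower r (2 * (sqrt ((a + 3) / 2) - 1)).

Definition V_pot (A eta mu : R) (rho : R) : R :=
  eta * Rpower rho (A + 1)
  + mu * ((A + 3) / 2) ^ 2 * Rpower rho (2 * (sqrt ((A + 3) / 2) - 1)).

Definition newton_transform (A : R) (u : R -> R) (rho : R) : R :=
  Rpower rho (- (A + 1) / 4) * u (Rpower rho ((A + 3) / 2)).

(* Main.v *)
Require Import Defs.
From Stdlib Require Import Reals Lra.
From Coquelicot Require Import Coquelicot.
Open Scope R_scope.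

Lemma dmul (f g : R -> R) x df dg l :
  is_derive f x df -> is_derive g x dg -> l = df * g x + f x * dg ->
  is_derive (fun t => f t * g t) x l.
Proof. intros H1 H2 ->. apply (is_derive_mult f g x df dg H1 H2). intros; apply Rmult_comm. Qed.

Lemma dplus (f g : R -> R) x df dg l :
  is_derive f x df -> is_derive g x dg -> l = df + dg ->
  is_derive (fun t => f t + g t) x l.
Proof. intros H1 H2 ->. apply (is_derive_plus f g x df dg H1 H2). Qed.

Lemma dcomp (f g : R -> R) x df dg l :
  is_derive f (g x) df -> is_derive g x dg -> l = dg * df ->
  is_derive (fun t => f (g t)) x l.
Proof. intros H1 H2 ->. apply (is_derive_comp f g x df dg H1 H2). Qed.

Lemma dpow y x l : 0 < x -> l = y * Rpower x (y - 1) ->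
  is_derive (fun t => Rpower t y) x l.
Proof. intros H ->. apply is_derive_Reals. now apply derivable_pt_lim_power. Qed.

Lemma dconst c x : is_derive (fun _ => c) x 0.
Proof. apply (is_derive_const c x). Qed.

Lemma Rpower_pos x y : 0 < Rpower x y.
Proof. unfold Rpower; apply exp_pos. Qed.

Lemma Psub x y z : Rpower x (y - z) = Rpower x y / Rpower x z.
Proof. unfold Rminus, Rdiv. rewrite Rpower_plus, Rpower_Ropp. reflexivity. Qed.

Theorem mainTheorem6 (a A xi eta mu calE E l ell : R) (u : R -> R) :
  0 < a + 3 ->
  newton_dual_exp a A ->
  l + 1 / 2 = 2 / (A + 3) * (ell + 1 / 2) ->
  xi = - calE * (2 / (A + 3)) ^ 2 ->
  E = - eta * (2 / (A + 3)) ^ 2 ->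
  C2_pos u ->
  solves_radial (U_pot a xi mu) E l u ->
  solves_radial (V_pot A eta mu) calE ell (newton_transform A u)
  /\ newton_dual_exp (2 * sqrt ((a + 3) / 2) - 3) (2 * sqrt ((A + 3) / 2) - 3).
Proof.
  intros Ha Hd Hl Hxi HE _ [u1 [u2 Hu]].
  unfold newton_dual_exp in *.
  assert (HA0 : A + 3 <> 0).
  { intro Z. rewrite Z in Hd. unfold Rdiv in Hd. rewrite Rinv_0, Rmult_0_r in Hd. lra. }
  assert (HA : 0 < A + 3).
  { destruct (Rlt_or_le 0 (A+3)) as [h|h]; auto.
    exfalso. assert (/(A+3) < 0) by (apply Rinv_lt_0_compat; lra).
    unfold Rdiv in Hd. nra. }
  set (s := (A + 3) / 2) in *.
  assert (Hs : 0 < s) by (unfold s; lra).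
  assert (Hsa : (a + 3) / 2 = / s) by (rewrite Hd; unfold s; field; lra).
  assert (E2 : 2 / (A + 3) = / s) by (unfold s; field; lra).
  rewrite E2 in Hl, Hxi, HE.
  assert (HA1 : A + 1 = s + s - (1 + 1)) by (unfold s; field).
  assert (Hp : - (A + 1) / 4 = (1 - s) / 2) by (unfold s; field).
  set (p := (1 - s) / 2) in *.
  set (q := sqrt s).
  assert (Hq : q * q = s) by (apply sqrt_sqrt; lra).
  assert (Hq0 : 0 < q) by (apply sqrt_lt_R0; lra).
  assert (Hsq : sqrt (/ s) = / q) by (apply sqrt_inv).
  split.
  2:{ rewrite Hsa, Hsq. fold q. field. lra. }
  unfold solves_radial, newton_transform, V_pot.
  rewrite Hp, HA1. fold q.
  change ((A + 3) / 2) with s.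
  exists (fun t => (p * Rpower t (p-1)) * u (Rpower t s)
                   + Rpower t p * ((s * Rpower t (s-1)) * u1 (Rpower t s))).
  exists (fun t => (p*((p-1)*Rpower t (p-1-1))) * u (Rpower t s)
     + (p*Rpower t (p-1)) * ((s*Rpower t (s-1)) * u1 (Rpower t s))
     + ( (p*Rpower t (p-1)) * ((s*Rpower t (s-1))*u1 (Rpower t s))
     + Rpower t p * ( (s*((s-1)*Rpower t (s-1-1))) * u1 (Rpower t s)
     + (s*Rpower t (s-1)) * ((s*Rpower t (s-1)) * u2 (Rpower t s)) ) )).
  intros t Ht.
  destruct (Hu (Rpower t s) (Rpower_pos _ _)) as [D1 [D2 Eq]].
  split; [|split].
  - eapply dmul. apply dpow; [exact Ht|reflexivity].
    eapply dcomp. exact D1. apply dpow; [exact Ht|reflexivity]. reflexivity. ring.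
  - eapply dplus.
    + eapply dmul. apply is_derive_scal. apply dpow; [exact Ht|reflexivity].
      eapply dcomp. exact D1. apply dpow; [exact Ht|reflexivity]. reflexivity. reflexivity.
    + eapply dmul. apply dpow; [exact Ht|reflexivity].
      eapply dmul. apply is_derive_scal. apply dpow; [exact Ht|reflexivity].
      eapply dcomp. exact D2. apply dpow; [exact Ht|reflexivity]. reflexivity. reflexivity.
      reflexivity.
    + ring.
  - unfold U_pot in Eq. rewrite Hsa, Hsq in Eq. rewrite !Rpower_mult in Eq.
    assert (Hav : a = 2 * / s - 3) by lra.
    assert (e1 : s * (a + 1) = (1 + 1) - (s + s)) by (rewrite Hav; field; lra).
    assert (e2 : s * (2 * (/ q - 1)) = (q + q) - (s + s)).
    { rewrite <- Hq. field. lra. }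
    assert (e3 : 2 * (sqrt s - 1) = (q + q) - (1 + 1)) by (fold q; ring).
    rewrite e1, e2 in Eq. rewrite e3.
    rewrite !Psub in Eq. rewrite !Psub. rewrite !Rpower_plus in Eq. rewrite !Rpower_plus.
    rewrite !(Rpower_1 t Ht) in Eq. rewrite !(Rpower_1 t Ht).
    set (W := Rpower t p) in *. set (S := Rpower t s) in *. set (Q := Rpower t q) in *.
    assert (HS : 0 < S) by apply Rpower_pos.
    assert (Hl' : l = / s * (ell + 1 / 2) - 1 / 2) by lra.
    assert (U2 : u2 S = - ((E - l * (l + 1) / S ^ 2 -
       (xi * (t * t / (S * S)) + mu * (Q * Q / (S * S)))) * u S)) by lra.
    rewrite U2. rewrite Hl', Hxi, HE. unfold p.
    field. split; lra.
Qed.
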